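(* Let $\mathcal I$ be an admissible ideal on $\mathbb N$. Then $\mathcal A\not\subseteq\mathfrak N^{\mathcal I}$: there is an Arbault set which does not belong to $\mathfrak N^{\mathcal I}$.
   Context: $\mathbb T=\mathbb R/\mathbb Z$ identified with $[0,1]$ (0 and 1 identified); $\|x\|$ is the distance from $x$ to the nearest integer. An ideal $\mathcal I$ on $\mathbb N$ is a nonempty family of subsets of $\mathbb N$ closed under finite unions and subsets with $\mathbb N\notin\mathcal I$; admissible means all singletons belong to it. $\mathcal A$: Arbault sets, i.e. sets $X\subseteq[0,1]$ with an increasing sequence of naturals $(a_n)$ such that $\|a_nx\|\to0$ for all $x\in X$. $\mathfrak N^{\mathcal I}$: the family of sets $X\subseteq[0,1]$ for which there exist an increasing sequence of naturals $(a_n)$ and a decreasing sequence of positive reals $(r_n)$ with $\sum_n r_n=\infty$, such that every $A\subseteq\mathbb N$ with $\sum_{n\in A}r_n<\infty$ belongs to $\mathcal I$, and such that $\sum_n r_n\|a_nx\|<\infty$ for all $x\in X$. *)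

(* Defs.v *)
From Stdlib Require Import Reals ClassicalDescription.
From Coquelicot Require Import Coquelicot.
Open Scope R_scope.

(* ||x|| : distance from x to the nearest integer.
   Int_part x is floor x, so x - Int_part x is the fractional part in [0,1). *)
Definition frac_part (x : R) : R := x - IZR (Int_part x).
Definition dist_int (x : R) : R := Rmin (frac_part x) (1 - frac_part x).

Definition nsubset (A B : nat -> Prop) : Prop := forall n, A n -> B n.

Definition is_ideal (I : (nat -> Prop) -> Prop) : Prop :=
  (exists A, I A) /\
  (forall A B, I A -> I B -> I (fun n => A n \/ B n)) /\
  (forall A B, I A -> nsubset B A -> I B) /\
  ~ I (fun _ => True).

Definition admissible_ideal (I : (nat -> Prop) -> Prop) : Prop :=
  is_ideal I /\ forall k : nat, I (fun n => n = k).

Definition strictly_increasing (a : nat -> nat) : Prop :=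
  forall n, (a n < a (S n))%nat.

(* Sets X ⊆ [0,1] (the torus identified with [0,1]). *)
Definition in_unit_interval (X : R -> Prop) : Prop :=
  forall x, X x -> 0 <= x <= 1.

Definition Arbault (X : R -> Prop) : Prop :=
  in_unit_interval X /\
  exists a : nat -> nat, strictly_increasing a /\
    forall x, X x -> is_lim_seq (fun n => dist_int (INR (a n) * x)) 0.

Definition restrict (A : nat -> Prop) (r : nat -> R) (n : nat) : R :=
  if excluded_middle_informative (A n) then r n else 0.

Definition in_N_I (I : (nat -> Prop) -> Prop) (X : R -> Prop) : Prop :=
  in_unit_interval X /\
  exists (a : nat -> nat) (r : nat -> R),
    strictly_increasing a /\
    (forall n, 0 < r n) /\
    (forall n, r (S n) <= r n) /\
    ~ ex_series r /\
    (forall A : nat -> Prop, ex_series (restrict A r) -> I A) /\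
    (forall x, X x -> ex_series (fun n => r n * dist_int (INR (a n) * x))).

(* Main.v *)
Require Import Defs.
From Stdlib Require Import Reals ClassicalDescription.
From Coquelicot Require Import Coquelicot.
From Stdlib Require Import ClassicalEpsilon Lia Lra ZArith Arith Classical.
Open Scope R_scope.

Lemma dist_le (x : R) (k : Z) : dist_int x <= Rabs (x - IZR k).
Proof.
  unfold dist_int, Defs.frac_part.
  destruct (base_Int_part x) as [H1 H2].
  set (f := Int_part x) in *.
  destruct (Z.le_gt_cases k f) as [Hk|Hk].
  - apply IZR_le in Hk.
    apply Rle_trans with (x - IZR f); [apply Rmin_l|].
    rewrite Rabs_right; lra.
  - assert (Hk' : (f + 1 <= k)%Z) by lia. apply IZR_le in Hk'.
    rewrite plus_IZR in Hk'.
    apply Rle_trans with (1 - (x - IZR f)); [apply Rmin_r|].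
    rewrite Rabs_left1; lra.
Qed.

Lemma dist_ex (x : R) : exists k : Z, dist_int x = Rabs (x - IZR k).
Proof.
  unfold dist_int, Defs.frac_part.
  destruct (base_Int_part x) as [H1 H2].
  set (f := Int_part x) in *.
  destruct (Rle_dec (x - IZR f) (1 - (x - IZR f))).
  - exists f. rewrite Rmin_left by lra. rewrite Rabs_right; lra.
  - exists (f+1)%Z. rewrite Rmin_right by lra. rewrite plus_IZR. rewrite Rabs_left1; lra.
Qed.

Lemma dist_nonneg x : 0 <= dist_int x.
Proof. destruct (dist_ex x) as [k ->]. apply Rabs_pos. Qed.

Lemma dist_int_Z (k : Z) : dist_int (IZR k) = 0.
Proof. apply Rle_antisym; [|apply dist_nonneg].
  eapply Rle_trans; [apply (dist_le _ k)|]. unfold Rminus; rewrite Rplus_opp_r, Rabs_R0; lra. Qed.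

Lemma dist_shift u (k : Z) : dist_int (u + IZR k) = dist_int u.
Proof.
  apply Rle_antisym.
  - destruct (dist_ex u) as [j Hj]. rewrite Hj.
    eapply Rle_trans; [apply (dist_le _ (j + k))|]. rewrite plus_IZR.
    right; f_equal; ring.
  - destruct (dist_ex (u + IZR k)) as [j Hj]. rewrite Hj.
    eapply Rle_trans; [apply (dist_le _ (j - k))|]. rewrite minus_IZR.
    right; f_equal; ring.
Qed.

Lemma dist_sub u w : dist_int (u - w) <= dist_int u + dist_int w.
Proof.
  destruct (dist_ex u) as [j Hj]. destruct (dist_ex w) as [l Hl].
  rewrite Hj, Hl. eapply Rle_trans; [apply (dist_le _ (j - l))|].
  rewrite minus_IZR.
  replace (u - w - (IZR j - IZR l)) with ((u - IZR j) - (w - IZR l)) by ring.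
  apply Rabs_triang_inv2 || (unfold Rminus at 1; eapply Rle_trans; [apply Rabs_triang|]; rewrite Rabs_Ropp; lra).
Qed.

Lemma dist_lip u w : dist_int w <= dist_int u + Rabs (w - u).
Proof.
  destruct (dist_ex u) as [j Hj]. rewrite Hj.
  eapply Rle_trans; [apply (dist_le _ j)|].
  replace (w - IZR j) with ((u - IZR j) + (w - u)) by ring. apply Rabs_triang.
Qed.


Lemma pow2_pos (n : nat) : 0 < 2 ^ n.
Proof. apply pow_lt; lra. Qed.

Lemma dist_frac (c T : nat) : (c mod 2^T <> 0)%nat -> / 2^T <= dist_int (INR c * / 2^T).
Proof.
  intros Hc.
  destruct (dist_ex (INR c * / 2^T)) as [k Hk]. rewrite Hk.
  pose proof (pow2_pos T) as HP.
  set (z := (Z.of_nat c - k * 2^ Z.of_nat T)%Z).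
  assert (Hz : INR c * / 2^T - IZR k = IZR z * / 2^T).
  { unfold z. rewrite minus_IZR, mult_IZR, <- INR_IZR_INZ, <- pow_IZR.
    field. lra. }
  rewrite Hz.
  assert (Hz0 : z <> 0%Z).
  { intro E. apply Hc. unfold z in E.
    assert (E2 : Z.of_nat c = (k * 2 ^ Z.of_nat T)%Z) by lia.
    apply Nat2Z.inj. rewrite Nat2Z.inj_mod, Nat2Z.inj_pow, E2. simpl.
    apply Z_mod_mult. }
  assert (H1 : 1 <= Rabs (IZR z)).
  { destruct (Z.le_gt_cases 1 z).
    - apply IZR_le in H. rewrite Rabs_right; lra.
    - assert (z <= -1)%Z by lia. apply IZR_le in H0. rewrite Rabs_left1; lra. }
  rewrite Rabs_mult. rewrite (Rabs_right (/ 2^T)) by (left; apply Rinv_0_lt_compat; auto).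
  pattern (/ 2^T) at 1; rewrite <- Rmult_1_l.
  apply Rmult_le_compat_r; [left; apply Rinv_0_lt_compat; auto| auto].
Qed.

Lemma div_INR (b q : nat) : (b mod 2^q = 0)%nat -> INR b * / 2^q = INR (b / 2^q).
Proof.
  intros H. apply Nat.Div0.div_exact in H.
  rewrite H at 1. rewrite mult_INR, pow_INR. simpl INR. replace (1+1) with 2 by ring.
  field. apply pow_nonzero. lra.
Qed.

Lemma reward (b m T : nat) : (b mod 2^(m*T) = 0)%nat -> (b mod 2^((S m)*T) <> 0)%nat ->
  / 2^T <= dist_int (INR b * / 2^(S m * T)).
Proof.
  intros H1 H2.
  set (c := (b / 2^(m*T))%nat).
  assert (Hb : b = (2^(m*T) * c)%nat) by (apply Nat.Div0.div_exact; auto).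
  assert (Hc : (c mod 2^T <> 0)%nat).
  { intro E. apply H2. apply Nat.Div0.mod_divides in E. destruct E as [e He].
    apply Nat.Div0.mod_divides. exists e. rewrite Hb, He.
    replace (S m * T)%nat with (m*T + T)%nat by lia. rewrite Nat.pow_add_r. ring. }
  replace (INR b * / 2 ^ (S m * T)) with (INR c * / 2^T).
  - apply dist_frac; auto.
  - rewrite Hb, mult_INR, pow_INR. replace (S m * T)%nat with (m*T + T)%nat by lia.
    rewrite pow_add. simpl INR. replace (1+1) with 2 by ring.
    field. split; apply pow_nonzero; lra.
Qed.


Fixpoint fs (f : nat -> R) (a len : nat) : R :=
  match len with O => 0 | S l => fs f a l + f (a + l)%nat end.

Lemma fs_plus f g a len : fs (fun n => f n + g n) a len = fs f a len + fs g a len.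
Proof. induction len; simpl; [ring| rewrite IHlen; ring]. Qed.
Lemma fs_scal c f a len : fs (fun n => c * f n) a len = c * fs f a len.
Proof. induction len; simpl; [ring| rewrite IHlen; ring]. Qed.
Lemma fs_le f g a len : (forall n, f n <= g n) -> fs f a len <= fs g a len.
Proof. intros H; induction len; simpl; [lra| specialize (H (a+len)%nat); lra]. Qed.
Lemma fs_nonneg f a len : (forall n, 0 <= f n) -> 0 <= fs f a len.
Proof. intros H; induction len; simpl; [lra| specialize (H (a+len)%nat); lra]. Qed.
Lemma fs_split f a l1 l2 : fs f a (l1 + l2) = fs f a l1 + fs f (a + l1) l2.
Proof. induction l2; simpl. rewrite Nat.add_0_r; ring. rewrite Nat.add_succ_r; simpl.
  rewrite IHl2, Nat.add_assoc; ring. Qed.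
Lemma fs_ext f g a len : (forall n, (a <= n < a + len)%nat -> f n = g n) -> fs f a len = fs g a len.
Proof. intros H; induction len; simpl; auto. rewrite IHlen by (intros; apply H; lia).
  rewrite H by lia; auto. Qed.
Lemma fs_sum_n f N : fs f 0 (S N) = sum_n f N.
Proof. induction N. simpl. rewrite sum_O. ring.
  rewrite sum_Sn. change (fs f 0 (S (S N))) with (fs f 0 (S N) + f (0 + S N)%nat).
  rewrite IHN. reflexivity. Qed.

Definition bitv (b : nat -> bool) (q : nat) : R := if b q then / 2^q else 0.
Fixpoint Pb (b : nat -> bool) (n : nat) : R :=
  match n with O => bitv b 0 | S n => Pb b n + bitv b (S n) end.
Fixpoint Nb (b : nat -> bool) (n : nat) : nat :=
  match n with O => (if b 0%nat then 1 else 0)%nat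
  | S n => (2 * Nb b n + (if b (S n) then 1 else 0))%nat end.

Lemma bitv_nonneg b q : 0 <= bitv b q.
Proof. unfold bitv. destruct (b q); [left; apply Rinv_0_lt_compat, pow2_pos|lra]. Qed.

Lemma Pb_int b n : 2^n * Pb b n = INR (Nb b n).
Proof.
  induction n.
  - simpl; unfold bitv. destruct (b 0%nat); simpl; field.
  - change (Pb b (S n)) with (Pb b n + bitv b (S n)).
    change (Nb b (S n)) with (2 * Nb b n + (if b (S n) then 1 else 0))%nat.
    unfold bitv. rewrite plus_INR, mult_INR, <- IHn. destruct (b (S n)); simpl.
    + field. apply pow_nonzero; lra.
    + ring.
Qed.

Lemma Pb_ext b c n : (forall q, (q <= n)%nat -> b q = c q) -> Pb b n = Pb c n.
Proof. intros H; induction n; simpl; unfold bitv.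
  - rewrite H; auto.
  - rewrite IHn by (intros; apply H; lia). rewrite (H (S n)); auto. Qed.

Lemma Pb_agree b c Q H : (Q <= H)%nat -> (forall q, (Q < q <= H)%nat -> b q = c q) ->
  Pb b H - Pb c H = Pb b Q - Pb c Q.
Proof.
  intros HQ E. induction H as [|H IH].
  - assert (Q = 0%nat) by lia. subst. auto.
  - destruct (Nat.eq_dec Q (S H)). { subst; auto. }
    simpl. unfold bitv. rewrite (E (S H)) by lia.
    rewrite <- IH by (try lia; intros; apply E; lia). ring.
Qed.

Definition upd (g : nat -> bool) (q0 : nat) (e : bool) : nat -> bool :=
  fun q => if Nat.eqb q q0 then e else g q.

Lemma Pb_upd g q0 H : (q0 <= H)%nat ->
  Pb (upd g q0 true) H - Pb (upd g q0 false) H = / 2^q0.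
Proof.
  intros Hq. induction H as [|H IH].
  - assert (q0 = 0%nat) by lia. subst. simpl. unfold bitv, upd. simpl. field.
  - destruct (Nat.eq_dec q0 (S H)).
    + subst. simpl.
      rewrite (Pb_ext (upd g (S H) true) g) by (intros; unfold upd;
        destruct (Nat.eqb_spec q (S H)); [lia|auto]).
      rewrite (Pb_ext (upd g (S H) false) g) by (intros; unfold upd;
        destruct (Nat.eqb_spec q (S H)); [lia|auto]).
      unfold bitv, upd. rewrite Nat.eqb_refl. simpl. ring.
    + simpl. rewrite <- IH by lia. unfold bitv, upd.
      destruct (Nat.eqb_spec (S H) q0); [lia|]. simpl. ring.
Qed.

Lemma Pb_S_ge b n : Pb b n <= Pb b (S n).
Proof. simpl. pose proof (bitv_nonneg b (S n)). lra. Qed.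

Lemma Pb_mono b n m : (n <= m)%nat -> Pb b n <= Pb b m.
Proof. induction 1; [lra| eapply Rle_trans; [apply IHle| apply Pb_S_ge]]. Qed.

Lemma Pb_nonneg b n : 0 <= Pb b n.
Proof. induction n; simpl; [apply bitv_nonneg| pose proof (bitv_nonneg b (S n)); lra]. Qed.

Lemma Pb_const b Q Q' : (Q <= Q')%nat -> (forall q, (Q < q <= Q')%nat -> b q = false) ->
  Pb b Q' = Pb b Q.
Proof.
  intros HQ E. induction Q' as [|Q' IH].
  - assert (Q = 0%nat) by lia; subst; auto.
  - destruct (Nat.eq_dec Q (S Q')). { subst; auto. }
    simpl. unfold bitv. rewrite E by lia. rewrite IH by (try lia; intros; apply E; lia). ring.
Qed.

Lemma Pb_tail b Q Q' : (Q <= Q')%nat -> (forall q, (Q < q <= Q')%nat -> b q = false) ->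
  forall N, Pb b N <= Pb b Q + / 2^Q'.
Proof.
  intros HQ E.
  assert (K : forall k, Pb b (Q' + k) <= Pb b Q + / 2^Q' - / 2^(Q'+k)).
  { induction k.
    - rewrite Nat.add_0_r, (Pb_const b Q Q') by auto. lra.
    - rewrite Nat.add_succ_r.
      change (Pb b (S (Q'+k))) with (Pb b (Q'+k) + bitv b (S (Q'+k))). unfold bitv.
      assert (/ 2 ^ S (Q' + k) = / 2^(Q'+k) / 2) by (simpl; field; apply pow_nonzero; lra).
      destruct (b (S (Q'+k))); rewrite H in *;
      pose proof (pow2_pos (Q'+k)); pose proof (Rinv_0_lt_compat _ H0); lra. }
  intros N. destruct (Nat.le_gt_cases Q' N).
  - replace N with (Q' + (N - Q'))%nat by lia. pose proof (K (N - Q')%nat).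
    pose proof (pow2_pos (Q' + (N-Q'))); pose proof (Rinv_0_lt_compat _ H1). lra.
  - eapply Rle_trans; [apply (Pb_mono b N Q'); lia|].
    pose proof (K 0%nat). rewrite Nat.add_0_r in H0. pose proof (pow2_pos Q'). 
    pose proof (Rinv_0_lt_compat _ H1). lra.
Qed.

Lemma Pb_bound b n : Pb b n <= 2.
Proof.
  assert (forall n, Pb b n <= 2 - / 2^n).
  { induction n0.
    - simpl. unfold bitv. destruct (b 0%nat); simpl; lra.
    - simpl Pb. unfold bitv. 
      assert (/ 2 ^ S n0 = / 2^n0 / 2) by (simpl; field; apply pow_nonzero; lra).
      pose proof (pow2_pos n0). pose proof (Rinv_0_lt_compat _ H0).
      destruct (b (S n0)); lra. }
  pose proof (H n). pose proof (pow2_pos n). pose proof (Rinv_0_lt_compat _ H1). lra.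
Qed.

Lemma Pb_bound1 b n : b 0%nat = false -> Pb b n <= 1.
Proof.
  intros H0.
  assert (forall n, Pb b n <= 1 - / 2^n).
  { induction n0.
    - simpl. unfold bitv. rewrite H0. lra.
    - simpl Pb. unfold bitv. 
      assert (/ 2 ^ S n0 = / 2^n0 / 2) by (simpl; field; apply pow_nonzero; lra).
      pose proof (pow2_pos n0). pose proof (Rinv_0_lt_compat _ H1).
      destruct (b (S n0)); lra. }
  pose proof (H n). pose proof (pow2_pos n). pose proof (Rinv_0_lt_compat _ H2). lra.
Qed.

Definition xval (b : nat -> bool) : R := Lim_seq (Pb b).

Lemma xval_lim b : is_lim_seq (Pb b) (xval b).
Proof. apply Lim_seq_correct'. apply (ex_finite_lim_seq_incr _ 2); [apply Pb_S_ge| apply Pb_bound]. Qed.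

Lemma xval_ge b n : Pb b n <= xval b.
Proof. apply is_lim_seq_incr_compare; [apply xval_lim| apply Pb_S_ge]. Qed.

Lemma xval_tail b Q Q' : (Q <= Q')%nat -> (forall q, (Q < q <= Q')%nat -> b q = false) ->
  xval b <= Pb b Q + / 2^Q'.
Proof.
  intros HQ E. pose proof (is_lim_seq_le (Pb b) (fun _ => Pb b Q + / 2^Q') (xval b) (Pb b Q + / 2^Q')
    (Pb_tail b Q Q' HQ E) (xval_lim b) (is_lim_seq_const _)). simpl in H. auto.
Qed.

Lemma xval_bound b : b 0%nat = false -> 0 <= xval b <= 1.
Proof.
  intros H0. split.
  - eapply Rle_trans; [apply (Pb_nonneg b 0)| apply xval_ge].
  - pose proof (is_lim_seq_le (Pb b) (fun _ => 1) (xval b) 1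
    (fun n => Pb_bound1 b n H0) (xval_lim b) (is_lim_seq_const _)). simpl in H. auto.
Qed.


Lemma ser_bounded (u : nat -> R) : (forall n, 0 <= u n) -> ex_series u ->
  exists M, forall N, fs u 0 N <= M.
Proof.
  intros Hu [l Hl]. exists l. intros N.
  assert (Hl' : is_lim_seq (sum_n u) l) by exact Hl.
  destruct N. { simpl. apply (Rle_trans _ (sum_n u 0)). rewrite sum_O; apply Hu.
    apply is_lim_seq_incr_compare; auto. intros n; rewrite sum_Sn; specialize (Hu (S n)); 
    unfold plus; simpl; lra. }
  rewrite fs_sum_n. apply is_lim_seq_incr_compare; auto.
  intros n; rewrite sum_Sn; specialize (Hu (S n)); unfold plus; simpl; lra.
Qed.

Lemma bounded_ser (u : nat -> R) M : (forall n, 0 <= u n) -> (forall N, fs u 0 N <= M) -> ex_series u.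
Proof.
  intros Hu HM.
  destruct (ex_finite_lim_seq_incr (sum_n u) M) as [l Hl].
  - intros n; rewrite sum_Sn; specialize (Hu (S n)); unfold plus; simpl; lra.
  - intros n; rewrite <- fs_sum_n; auto.
  - exists l. exact Hl.
Qed.

Lemma fs_mono_len u a l1 l2 : (forall n, 0 <= u n) -> (l1 <= l2)%nat -> fs u a l1 <= fs u a l2.
Proof. intros Hu H. replace l2 with (l1 + (l2 - l1))%nat by lia. rewrite fs_split.
  pose proof (fs_nonneg u (a + l1) (l2 - l1) Hu). lra. Qed.

Lemma unbounded_tail (u : nat -> R) : (forall n, 0 <= u n) -> ~ ex_series u ->
  forall A M, exists len, M <= fs u A len.
Proof.
  intros Hu Hn A M. apply NNPP. intro C.
  apply Hn. apply (bounded_ser u (fs u 0 A + M)); auto.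
  intros N. apply (Rle_trans _ (fs u 0 (A + N))).
  - apply fs_mono_len; auto; lia.
  - rewrite fs_split. simpl.
    assert (fs u A N <= M). { apply Rnot_lt_le. intro h. apply C. exists N. lra. }
    lra.
Qed.


Lemma insens (bb Q H : nat) (be ga : nat -> bool) : (bb mod 2^Q = 0)%nat -> (Q <= H)%nat ->
  (forall q, (Q < q <= H)%nat -> be q = ga q) ->
  dist_int (INR bb * Pb be H) = dist_int (INR bb * Pb ga H).
Proof.
  intros Hb HQ E.
  set (c := (bb / 2^Q)%nat).
  assert (Hc : bb = (2^Q * c)%nat) by (apply Nat.Div0.div_exact; auto).
  pose proof (Pb_agree be ga Q H HQ E) as D.
  pose proof (Pb_int be Q) as I1. pose proof (Pb_int ga Q) as I2.
  assert (INR bb * Pb be H = INR bb * Pb ga H +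
     IZR (Z.of_nat c * (Z.of_nat (Nb be Q) - Z.of_nat (Nb ga Q)))).
  { rewrite mult_IZR, minus_IZR, <- !INR_IZR_INZ, <- I1, <- I2.
    rewrite Hc, mult_INR, pow_INR. simpl INR. replace (1+1) with 2 by ring.
    replace (Pb be H) with (Pb ga H + (Pb be Q - Pb ga Q)) by lra. ring. }
  rewrite H0. apply dist_shift.
Qed.

Definition cnd (b : nat -> nat) (lo hi n : nat) : bool :=
  andb (Nat.eqb (b n mod 2^lo) 0) (negb (Nat.eqb (b n mod 2^hi) 0)).

Lemma mod_pow_le (x m k : nat) : (m <= k)%nat -> (x mod 2^k = 0)%nat -> (x mod 2^m = 0)%nat.
Proof.
  intros Hmk H. apply Nat.Div0.mod_divides in H. destruct H as [c Hc].
  apply Nat.Div0.mod_divides. exists (2^(k-m) * c)%nat. rewrite Hc.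
  replace k with (m + (k - m))%nat at 1 by lia. rewrite Nat.pow_add_r. ring.
Qed.

Lemma stage (b : nat -> nat) (r : nat -> R) (Hr : forall n, 0 <= r n) (T m0 A len H : nat) (HT : (1 <= T)%nat) :
  forall d, ((m0 + d) * T <= H)%nat -> forall g : nat -> bool,
  (forall q, (m0*T < q)%nat -> g q = true -> Nat.divide T q) ->
  exists be, (forall q, (q <= m0*T \/ (m0+d)*T < q)%nat -> be q = g q) /\
    (forall q, (m0*T < q)%nat -> be q = true -> Nat.divide T q) /\
    / 2^(T+1) * fs (fun n => if cnd b (m0*T) ((m0+d)*T) n then r n else 0) A len
    <= fs (fun n => if cnd b (m0*T) ((m0+d)*T) n then r n * dist_int (INR (b n) * Pb be H) else 0) A len.
Proof.
  induction d as [|d IH]; intros Hd g Hg.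
  - exists g. split; [auto|split; [auto|]].
    rewrite Nat.add_0_r.
    assert (E : forall n, cnd b (m0*T) (m0*T) n = false).
    { intros n; unfold cnd. destruct (Nat.eqb (b n mod 2 ^ (m0 * T)) 0); reflexivity. }
    rewrite (fs_ext _ (fun _ => 0)) by (intros; rewrite E; auto).
    rewrite (fs_ext (fun n => if cnd b _ _ n then _ else _) (fun _ => 0)) by (intros; rewrite E; auto).
    assert (forall a l, fs (fun _ => 0) a l = 0) by (induction l; simpl; auto; lra).
    rewrite !H0. lra.
  - set (m := (m0 + d)%nat).
    set (q0 := (S m * T)%nat).
    set (Qc := fun n => andb (Nat.eqb (b n mod 2^(m0*T)) 0)
                 (andb (Nat.eqb (b n mod 2^(m*T)) 0) (negb (Nat.eqb (b n mod 2^q0) 0)))).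
    assert (Hq0 : (q0 <= H)%nat) by (unfold q0, m; lia).
    set (fQ := fun gg : nat -> bool =>
       fs (fun n => if Qc n then r n * dist_int (INR (b n) * Pb gg H) else 0) A len).
    assert (Hsum : / 2^T * fs (fun n => if Qc n then r n else 0) A len
                   <= fQ (upd g q0 true) + fQ (upd g q0 false)).
    { unfold fQ. rewrite <- fs_plus, <- fs_scal. apply fs_le. intros n.
      destruct (Qc n) eqn:EQ; [|lra].
      unfold Qc in EQ. apply andb_prop in EQ as [E1 EQ]. apply andb_prop in EQ as [E2 E3].
      apply Nat.eqb_eq in E2. apply Bool.negb_true_iff, Nat.eqb_neq in E3.
      pose proof (reward (b n) m T E2 E3) as Rw.
      pose proof (dist_sub (INR (b n) * Pb (upd g q0 true) H) (INR (b n) * Pb (upd g q0 false) H)) as Ds.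
      rewrite <- Rmult_minus_distr_l, Pb_upd in Ds by auto.
      fold q0 in Rw. specialize (Hr n). nra. }
    assert (Hch : exists e, / 2^(T+1) * fs (fun n => if Qc n then r n else 0) A len <= fQ (upd g q0 e)).
    { destruct (Rle_dec (/ 2^(T+1) * fs (fun n => if Qc n then r n else 0) A len) (fQ (upd g q0 true))).
      - exists true; auto.
      - exists false. rewrite pow_add in *. simpl pow in *. 
        assert (/ (2^T * (2*1)) = / 2^T / 2) by (field; apply pow_nonzero; lra).
        rewrite H0 in *. lra. }
    destruct Hch as [e He].
    destruct (IH ltac:(unfold m in *; nia) (upd g q0 e)) as [be [B1 [B2 B3]]].
    { intros q Hq Ht. unfold upd in Ht. destruct (Nat.eqb_spec q q0).
      - subst. exists (S m). reflexivity.
      - auto. }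
    exists be. split; [|split].
    + intros q Hq. rewrite B1 by (unfold m in *; nia). unfold upd.
      destruct (Nat.eqb_spec q q0); auto. unfold q0, m in *; nia.
    + auto.
    +
      assert (Hsplit : forall (F : nat -> R) n,
        (if cnd b (m0*T) ((m0 + S d)*T) n then F n else 0) =
        (if cnd b (m0*T) ((m0 + d)*T) n then F n else 0) + (if Qc n then F n else 0)).
      { intros F n. unfold cnd, Qc. fold m.
        replace ((m0 + S d) * T)%nat with q0 by (unfold q0, m; lia).
        destruct (Nat.eqb_spec (b n mod 2 ^ (m0 * T)) 0); simpl; [|lra].
        destruct (Nat.eqb_spec (b n mod 2 ^ (m * T)) 0); simpl;
        destruct (Nat.eqb_spec (b n mod 2 ^ q0) 0); simpl; try lra.
        exfalso. apply n0. apply (mod_pow_le _ _ q0); auto. unfold q0; lia. }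
      rewrite (fs_ext _ (fun n => (if cnd b (m0*T) ((m0 + d)*T) n then r n else 0) + (if Qc n then r n else 0)))
        by (intros; apply Hsplit).
      rewrite (fs_ext (fun n => if cnd b (m0 * T) ((m0 + S d) * T) n then _ else _)
        (fun n => (if cnd b (m0*T) ((m0 + d)*T) n then r n * dist_int (INR (b n) * Pb be H) else 0)
          + (if Qc n then r n * dist_int (INR (b n) * Pb be H) else 0)))
        by (intros; apply (Hsplit (fun n => r n * dist_int (INR (b n) * Pb be H)))).
      rewrite !fs_plus.
      assert (EqQ : fs (fun n => if Qc n then r n * dist_int (INR (b n) * Pb be H) else 0) A len
                    = fQ (upd g q0 e)).
      { unfold fQ. apply fs_ext. intros n _. destruct (Qc n) eqn:EQ; auto.
        unfold Qc in EQ. apply andb_prop in EQ as [E1 EQ]. apply andb_prop in EQ as [E2 E3].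
        apply Nat.eqb_eq in E2. f_equal. apply (insens _ (m*T)); auto.
        - unfold q0 in Hq0. nia.
        - intros q Hq. apply B1. fold m. lia. }
      rewrite EqQ. fold m in B3. unfold m in B3. lra.
Qed.


Definition aa (k : nat) : nat := (2 ^ (2 ^ k))%nat.
Definition XX (x : R) : Prop := 0 <= x <= 1 /\ is_lim_seq (fun k => dist_int (INR (aa k) * x)) 0.

Lemma dist_INR (n : nat) : dist_int (INR n) = 0.
Proof. rewrite INR_IZR_INZ. apply dist_int_Z. Qed.

Lemma pow_in_X (q : nat) : XX (/ 2^q).
Proof.
  split.
  - pose proof (pow2_pos q). split; [left; apply Rinv_0_lt_compat; auto|].
    rewrite <- Rinv_1. apply Rinv_le_contravar; [lra|]. apply pow_R1_Rle; lra.
  - apply (is_lim_seq_ext_loc (fun _ => 0)); [|apply is_lim_seq_const].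
    exists q. intros k Hk. unfold aa. rewrite div_INR.
    + rewrite dist_INR; auto.
    + apply (mod_pow_le _ _ (2^k)). pose proof (Nat.pow_gt_lin_r 2 k); lia.
      apply Nat.Div0.mod_same.
Qed.

Lemma ex_series_zero : ex_series (fun _ : nat => 0).
Proof. apply (bounded_ser _ 0). intros; lra. intros N. induction N; simpl; lra. Qed.

Definition Hyp (b : nat -> nat) (r : nat -> R) : Prop :=
  strictly_increasing b /\ (forall n, 0 < r n) /\ ~ ex_series r /\
  (forall x, XX x -> ex_series (fun n => r n * dist_int (INR (b n) * x))).

Fixpoint SV (b : nat -> nat) (r : nat -> R) (V n : nat) : R :=
  match V with O => 0 | S V => SV b r V n + 2 * (r n * dist_int (INR (b n) * / 2^(S V))) end.

Lemma SV_nonneg b r V n : 0 <= r n -> 0 <= SV b r V n.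
Proof. intros Hr; induction V; cbn [SV]; [lra|]. pose proof (dist_nonneg (INR (b n) * / 2 ^ S V)). nra. Qed.

Lemma SV_bound b r V n : 0 <= r n ->
  r n <= (if Nat.eqb (b n mod 2^V) 0 then r n else 0) + SV b r V n.
Proof.
  intros Hr. induction V.
  - assert (E: (b n mod 2^0 = 0)%nat) by apply Nat.mod_1_r. rewrite E. simpl. lra.
  - destruct (Nat.eqb_spec (b n mod 2^(S V)) 0).
    + pose proof (SV_nonneg b r (S V) n Hr). lra.
    + cbn [SV]. destruct (Nat.eqb_spec (b n mod 2^V) 0).
      * pose proof (reward (b n) V 1) as Rw. rewrite !Nat.mul_1_r in Rw.
        specialize (Rw e n0). pose proof (SV_nonneg b r V n Hr).
        replace (/ 2^1) with (/2) in Rw by (simpl; field). nra.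
      * pose proof (dist_nonneg (INR (b n) * / 2 ^ S V)). nra.
Qed.

Lemma SV_ser b r (H : Hyp b r) V : ex_series (SV b r V).
Proof.
  destruct H as [_ [Hr [_ Hs]]]. induction V.
  - apply ex_series_zero.
  - simpl. apply (ex_series_plus (SV b r V) (fun n => 2 * (r n * dist_int (INR (b n) * / 2 ^ S V)))); auto.
    apply (ex_series_scal_l 2 (fun n => r n * dist_int (INR (b n) * / 2 ^ S V))).
    apply Hs, pow_in_X.
Qed.

Lemma mass_inf b r (H : Hyp b r) V :
  ~ ex_series (fun n => if Nat.eqb (b n mod 2^V) 0 then r n else 0).
Proof.
  intros E. pose proof H as [_ [Hr [Hn _]]]. apply Hn.
  apply (ex_series_le r (fun n => (if Nat.eqb (b n mod 2^V) 0 then r n else 0) + SV b r V n)).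
  - intros n. specialize (Hr n). change (norm (r n)) with (Rabs (r n)). rewrite Rabs_right by lra.
    apply SV_bound; lra.
  - apply (ex_series_plus _ (SV b r V)); auto. apply (SV_ser b r H).
Qed.

Lemma sinc_lt (b : nat -> nat) : strictly_increasing b -> forall n m, (n < m)%nat -> (b n < b m)%nat.
Proof. intros Hb n m H. induction H. apply Hb. specialize (Hb m). lia. Qed.

Lemma sinc_ge (b : nat -> nat) : strictly_increasing b -> forall n, (n <= b n)%nat.
Proof. intros Hb n. induction n; [lia|]. specialize (Hb n). lia. Qed.


Definition TT (i : nat) : nat := (2 ^ (S i))%nat.

Definition indl (b : nat -> nat) (lo n : nat) (v : R) : R :=
  if Nat.eqb (b n mod 2^lo) 0 then v else 0.

Lemma step_ex b r (H : Hyp b r) (i lo A : nat) (be : nat -> bool) :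
  Nat.divide (TT i) lo -> (forall q, (lo < q)%nat -> be q = false) -> (1 <= A)%nat ->
  exists lo' A' be', Nat.divide (TT (S i)) lo' /\ (forall q, (lo' < q)%nat -> be' q = false) /\
    (1 <= A')%nat /\ (lo < lo')%nat /\ (A < A')%nat /\
    (forall q, (q <= lo)%nat -> be' q = be q) /\
    (forall q, (lo < q)%nat -> be' q = true -> Nat.divide (TT i) q) /\
    exists hi, (lo <= hi <= lo')%nat /\ (forall q, (hi < q)%nat -> be' q = false) /\
      2 <= fs (fun n => indl b lo n (r n * dist_int (INR (b n) * Pb be' hi))) A (A' - A) /\
      fs (fun n => r n * INR (b n)) A (A' - A) <= 2 ^ lo'.
Proof.
  intros [m0 Hlo] Hbe HA.
  pose proof H as [Hb [Hr [_ _]]].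
  set (T := TT i) in *.
  assert (HT : (1 <= T)%nat) by (unfold T, TT; pose proof (Nat.pow_gt_lin_r 2 (S i)); lia).
  destruct (unbounded_tail (fun n => indl b lo n (r n)) ltac:(intros n; unfold indl;
      destruct (Nat.eqb _ _); [left; auto| lra]) (mass_inf b r H lo) A (2 ^ (T + 2))) as [len Hlen].
  assert (Hlen1 : (1 <= len)%nat).
  { destruct len; [|lia]. simpl in Hlen. pose proof (pow2_pos (T+2)). lra. }
  set (B := (A + len)%nat).
  set (m1 := (b B + m0 + 1)%nat).
  set (hi := (m1 * T)%nat).
  destruct (stage b r (fun n => Rlt_le _ _ (Hr n)) T m0 A len hi HT (m1 - m0) ltac:(unfold hi; nia) be)
    as [be' [S1 [S2 S3]]].
  { intros q Hq Ht. rewrite Hbe in Ht by lia. discriminate. }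
  replace (m0 + (m1 - m0))%nat with m1 in * by (unfold m1; lia).
  rewrite <- Hlo in *. fold hi in S1, S3.
  assert (Ecnd : forall n, (A <= n < A + len)%nat -> cnd b lo hi n = Nat.eqb (b n mod 2^lo) 0).
  { intros n Hn. unfold cnd.
    assert (Hbn : (0 < b n < 2^hi)%nat).
    { split. pose proof (sinc_ge b Hb n). lia.
      pose proof (sinc_lt b Hb n B ltac:(unfold B; lia)).
      pose proof (Nat.pow_gt_lin_r 2 hi ltac:(lia)).
      assert (b B + 1 <= hi)%nat by (unfold hi, m1; nia). lia. }
    rewrite (Nat.mod_small (b n) (2^hi)) by lia.
    destruct (Nat.eqb (b n) 0) eqn:E; [apply Nat.eqb_eq in E; lia|].
    rewrite Bool.andb_true_r. auto. }
  destruct (nfloor_ex (fs (fun n => r n * INR (b n)) A len)) as [N HN].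
  { apply fs_nonneg. intros n. pose proof (pos_INR (b n)). specialize (Hr n). nra. }
  set (lo' := (TT (S i) * (hi + N + 1))%nat).
  assert (HTS : (1 <= TT (S i))%nat) by (unfold TT; pose proof (Nat.pow_gt_lin_r 2 (S (S i))); lia).
  exists lo', (A + len)%nat, be'.
  split; [exists (hi + N + 1)%nat; unfold lo'; ring|].
  split.
  { intros q Hq. rewrite S1 by (right; unfold lo' in Hq; nia). apply Hbe. unfold hi, m1 in *. nia. }
  split; [lia|]. split; [unfold lo', hi, m1 in *; nia|]. split; [lia|].
  split. { intros q Hq. apply S1. left; lia. }
  split. { intros q Hq Ht. eapply S2; eauto. }
  exists hi. split; [split; [unfold hi, m1; nia| unfold lo'; nia]|].
  split. { intros q Hq. rewrite S1 by (right; auto). apply Hbe. unfold hi, m1 in *. nia. }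
  replace (A + len - A)%nat with len by lia.
  split.
  - rewrite (fs_ext _ (fun n => if cnd b lo hi n then r n * dist_int (INR (b n) * Pb be' hi) else 0)).
    2:{ intros n Hn. unfold indl. rewrite Ecnd; auto. }
    eapply Rle_trans; [|apply S3].
    rewrite (fs_ext (fun n => if cnd b lo hi n then r n else 0) (fun n => indl b lo n (r n))).
    2:{ intros n Hn. unfold indl. rewrite Ecnd; auto. }
    assert (Heq : / 2 ^ (T + 1) * 2 ^ (T + 2) = 2).
    { rewrite !pow_add. simpl. field. apply pow_nonzero. lra. }
    pose proof (pow2_pos (T+1)) as Hp1. pose proof (Rinv_0_lt_compat _ Hp1).
    apply Rle_trans with (/ 2^(T+1) * 2^(T+2)); [rewrite Heq; lra| apply Rmult_le_compat_l; lra].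
  - apply Rle_trans with (INR (S N)); [rewrite S_INR; lra|].
    apply Rle_trans with (INR (2 ^ lo')).
    + apply le_INR. pose proof (Nat.pow_gt_lin_r 2 lo' ltac:(lia)). unfold lo' in *. nia.
    + rewrite pow_INR. right. f_equal.
Qed.


Definition St := (nat * nat * (nat -> bool))%type.
Definition loS (s : St) : nat := fst (fst s).
Definition AS (s : St) : nat := snd (fst s).
Definition bS (s : St) : nat -> bool := snd s.

Definition Inv (i : nat) (s : St) : Prop :=
  Nat.divide (TT i) (loS s) /\ (forall q, (loS s < q)%nat -> bS s q = false) /\ (1 <= AS s)%nat.

Definition Good b r (i : nat) (s s' : St) : Prop :=
  (loS s < loS s')%nat /\ (AS s < AS s')%nat /\
  (forall q, (q <= loS s)%nat -> bS s' q = bS s q) /\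
  (forall q, (loS s < q)%nat -> bS s' q = true -> Nat.divide (TT i) q) /\
  exists hi, (loS s <= hi <= loS s')%nat /\ (forall q, (hi < q)%nat -> bS s' q = false) /\
    2 <= fs (fun n => indl b (loS s) n (r n * dist_int (INR (b n) * Pb (bS s') hi))) (AS s) (AS s' - AS s) /\
    fs (fun n => r n * INR (b n)) (AS s) (AS s' - AS s) <= 2 ^ (loS s').

Lemma step_ex2 b r (H : Hyp b r) i s : Inv i s -> exists s', Inv (S i) s' /\ Good b r i s s'.
Proof.
  destruct s as [[lo A] be]. unfold Inv, Good, loS, AS, bS; simpl. intros [H1 [H2 H3]].
  destruct (step_ex b r H i lo A be H1 H2 H3) as [lo' [A' [be' [K1 [K2 [K3 [K4 [K5 [K6 [K7 K8]]]]]]]]]].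
  exists (lo', A', be'). simpl. tauto.
Qed.

Definition nxt b r (H : Hyp b r) (i : nat) (s : St) : St :=
  match excluded_middle_informative (Inv i s) with
  | left h => proj1_sig (constructive_indefinite_description _ (step_ex2 b r H i s h))
  | right _ => s end.

Fixpoint sq b r (H : Hyp b r) (i : nat) : St :=
  match i with O => (0%nat, 1%nat, fun _ => false) | S i => nxt b r H i (sq b r H i) end.

Lemma sq_spec b r H : forall i, Inv i (sq b r H i) /\ Good b r i (sq b r H i) (sq b r H (S i)).
Proof.
  assert (Hinv : forall i, Inv i (sq b r H i)).
  { induction i.
    - unfold Inv, loS, AS, bS; simpl. split; [exists 0%nat; lia| split; auto].
    - simpl. unfold nxt. destruct (excluded_middle_informative _); [|contradiction].
      destruct (constructive_indefinite_description _ _) as [s' [Hs Hs0]]. auto. }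
  intros i. split; auto. simpl. unfold nxt. destruct (excluded_middle_informative _); [|contradiction (n (Hinv i))].
  destruct (constructive_indefinite_description _ _) as [s' [Hs0 Hs]]. auto.
Qed.



Definition Lo b r H i := loS (sq b r H i).
Definition Aa b r H i := AS (sq b r H i).
Definition Be b r H i := bS (sq b r H i).
Definition BG b r H p := Be b r H p p.

Lemma inv_i b r H i : Nat.divide (TT i) (Lo b r H i) /\ (forall q, (Lo b r H i < q)%nat -> Be b r H i q = false)
  /\ (1 <= Aa b r H i)%nat.
Proof. apply (sq_spec b r H i). Qed.

Lemma good_i b r H i :
  (Lo b r H i < Lo b r H (S i))%nat /\ (Aa b r H i < Aa b r H (S i))%nat /\
  (forall q, (q <= Lo b r H i)%nat -> Be b r H (S i) q = Be b r H i q) /\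
  (forall q, (Lo b r H i < q)%nat -> Be b r H (S i) q = true -> Nat.divide (TT i) q) /\
  exists hi, (Lo b r H i <= hi <= Lo b r H (S i))%nat /\ (forall q, (hi < q)%nat -> Be b r H (S i) q = false) /\
    2 <= fs (fun n => indl b (Lo b r H i) n (r n * dist_int (INR (b n) * Pb (Be b r H (S i)) hi)))
           (Aa b r H i) (Aa b r H (S i) - Aa b r H i) /\
    fs (fun n => r n * INR (b n)) (Aa b r H i) (Aa b r H (S i) - Aa b r H i) <= 2 ^ (Lo b r H (S i)).
Proof. apply (sq_spec b r H i). Qed.

Lemma Lo_ge b r H i : (i <= Lo b r H i)%nat.
Proof. induction i; [lia|]. pose proof (proj1 (good_i b r H i)). lia. Qed.

Lemma Lo_mono b r H i j : (i <= j)%nat -> (Lo b r H i <= Lo b r H j)%nat.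
Proof. induction 1; [lia|]. pose proof (proj1 (good_i b r H m)). lia. Qed.

Lemma Be_stable b r H i j q : (q <= Lo b r H i)%nat -> (i <= j)%nat -> Be b r H j q = Be b r H i q.
Proof.
  intros Hq Hij. induction Hij; auto.
  destruct (good_i b r H m) as [_ [_ [E _]]]. rewrite E; auto.
  pose proof (Lo_mono b r H i m Hij). lia.
Qed.

Lemma BG_eq b r H i q : (q <= Lo b r H i)%nat -> BG b r H q = Be b r H i q.
Proof.
  intros Hq. unfold BG. destruct (Nat.le_gt_cases i q).
  - apply Be_stable; auto.
  - symmetry. apply Be_stable; [pose proof (Lo_ge b r H q); lia| lia].
Qed.

Lemma Be_src b r H : forall i p, Be b r H i p = true ->
  exists j, (Lo b r H j < p <= Lo b r H (S j))%nat /\ Nat.divide (TT j) p.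
Proof.
  induction i; intros p Hp.
  - unfold Be, sq in Hp. simpl in Hp. discriminate.
  - destruct (Nat.le_gt_cases p (Lo b r H i)).
    + destruct (good_i b r H i) as [_ [_ [E _]]]. rewrite E in Hp by auto. eauto.
    + exists i. destruct (good_i b r H i) as [_ [_ [_ [D _]]]].
      split; [split; auto|apply D; auto].
      destruct (Nat.le_gt_cases p (Lo b r H (S i))); auto.
      destruct (inv_i b r H (S i)) as [_ [Z _]]. rewrite Z in Hp by auto. discriminate.
Qed.

Lemma BG_src b r H p : BG b r H p = true ->
  exists j, (Lo b r H j < p <= Lo b r H (S j))%nat /\ Nat.divide (TT j) p.
Proof. apply Be_src. Qed.

Lemma TT_div i j : (i <= j)%nat -> Nat.divide (TT i) (TT j).
Proof. intros H. exists (2 ^ (j - i))%nat. unfold TT. rewrite <- Nat.pow_add_r. f_equal. lia. Qed.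

Lemma BG_gap b r H I q p : (Lo b r H I <= q)%nat -> Nat.divide (TT I) q -> (q < p < q + TT I)%nat ->
  BG b r H p = false.
Proof.
  intros H1 H2 H3. destruct (BG b r H p) eqn:E; auto. exfalso.
  destruct (BG_src b r H p E) as [j [[J1 J2] J3]].
  destruct (Nat.le_gt_cases I j).
  - pose proof (Nat.divide_trans _ _ _ (TT_div I j H0) J3) as [a Ha].
    destruct H2 as [c Hc]. subst.
    destruct (Nat.le_gt_cases a c) as [h|h].
    + pose proof (Nat.mul_le_mono_r a c (TT I) h). lia.
    + pose proof (Nat.mul_le_mono_r (S c) a (TT I) h). simpl in H2. lia.
  - pose proof (Lo_mono b r H (S j) I ltac:(lia)). lia.
Qed.

Lemma BG_0 b r H : BG b r H 0 = false.
Proof. reflexivity. Qed.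


Lemma inv_pow_le (a c : nat) : (a <= c)%nat -> / 2^c <= / 2^a.
Proof. intros H. apply Rinv_le_contravar; [apply pow2_pos|]. apply Rle_pow; [lra|auto]. Qed.

Lemma xg_arb b r H : is_lim_seq (fun k => dist_int (INR (aa k) * xval (BG b r H))) 0.
Proof.
  apply is_lim_seq_spec. intros eps.
  pose proof (is_lim_seq_geom (/ 2)) as G.
  assert (Rabs (/2) < 1) by (rewrite Rabs_right; lra).
  apply G, is_lim_seq_spec in H0. destruct (H0 eps) as [I HI].
  specialize (HI I (le_n _)). rewrite Rminus_0_r, Rabs_right in HI
    by (left; apply pow_lt; lra). rewrite pow_inv in HI.
  exists (Lo b r H I + I + 1)%nat. intros k Hk.
  set (Q := (2 ^ k)%nat).
  pose proof (Nat.pow_gt_lin_r 2 k ltac:(lia)) as Hkq. fold Q in Hkq.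
  assert (HQ1 : (Lo b r H I <= Q)%nat) by lia.
  assert (HQ2 : Nat.divide (TT I) Q).
  { exists (2 ^ (k - S I))%nat. unfold Q, TT. rewrite <- Nat.pow_add_r. f_equal. lia. }
  assert (HT : (I + 1 <= TT I)%nat) by (unfold TT; pose proof (Nat.pow_gt_lin_r 2 (S I)); lia).
  set (x := xval (BG b r H)).
  set (P := Pb (BG b r H) Q).
  assert (X1 : P <= x) by apply xval_ge.
  assert (X2 : x <= P + / 2^(Q + (TT I - 1))).
  { apply xval_tail; [lia|]. intros q Hq. apply (BG_gap b r H I Q); auto. lia. }
  rewrite Rminus_0_r, Rabs_right by apply Rle_ge, dist_nonneg.
  eapply Rle_lt_trans; [apply (dist_le _ (Z.of_nat (Nb (BG b r H) Q)))|].
  rewrite <- INR_IZR_INZ, <- Pb_int. fold P. unfold aa. fold Q. rewrite pow_INR.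
  replace (INR 2) with 2 by (simpl; ring).
  rewrite <- Rmult_minus_distr_l. rewrite Rabs_mult, !Rabs_right by (try apply Rle_ge; try lra; left; apply pow2_pos).
  apply Rle_lt_trans with (2^Q * / 2 ^ (Q + (TT I - 1))).
  - apply Rmult_le_compat_l; [left; apply pow2_pos| lra].
  - rewrite pow_add, Rinv_mult, <- Rmult_assoc, Rinv_r, Rmult_1_l by (apply pow_nonzero; lra).
    eapply Rle_lt_trans; [apply inv_pow_le with (a := I); lia| auto].
Qed.

Lemma xg_X b r H : XX (xval (BG b r H)).
Proof. split; [apply xval_bound, BG_0| apply xg_arb]. Qed.


Lemma stage_contrib b r H i :
  1 <= fs (fun n => r n * dist_int (INR (b n) * xval (BG b r H))) (Aa b r H i) (Aa b r H (S i) - Aa b r H i).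
Proof.
  pose proof H as [_ [Hr _]].
  destruct (good_i b r H i) as [_ [_ [_ [_ [hi [[Hh1 Hh2] [Hz [R2 RB]]]]]]]].
  set (lo' := Lo b r H (S i)) in *.
  set (x := xval (BG b r H)).
  set (P := Pb (Be b r H (S i)) hi) in *.
  assert (EP : P = Pb (BG b r H) hi).
  { unfold P. apply Pb_ext. intros q Hq. symmetry. apply BG_eq. lia. }
  assert (X1 : P <= x) by (rewrite EP; apply xval_ge).
  assert (X2 : x <= P + / 2^lo').
  { rewrite EP. apply xval_tail; [lia|]. intros q Hq. rewrite (BG_eq b r H (S i)) by lia. apply Hz. lia. }
  pose proof (pow2_pos lo') as Hp.
  apply Rle_trans with (fs (fun n => indl b (Lo b r H i) n (r n * dist_int (INR (b n) * P))
      + (- / 2^lo') * (r n * INR (b n))) (Aa b r H i) (Aa b r H (S i) - Aa b r H i)).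
  - rewrite fs_plus, fs_scal.
    assert (/ 2^lo' * fs (fun n => r n * INR (b n)) (Aa b r H i) (Aa b r H (S i) - Aa b r H i) <= 1).
    { apply Rle_trans with (/ 2^lo' * 2^lo'); [apply Rmult_le_compat_l; [left; apply Rinv_0_lt_compat; auto| auto]|].
      rewrite Rinv_l; lra. }
    lra.
  - apply fs_le. intros n. specialize (Hr n). pose proof (pos_INR (b n)) as Hb.
    pose proof (dist_nonneg (INR (b n) * x)).
    assert (0 <= / 2^lo') by (left; apply Rinv_0_lt_compat; auto).
    unfold indl. destruct (Nat.eqb _ _).
    + pose proof (dist_lip (INR (b n) * x) (INR (b n) * P)) as L.
      rewrite <- Rmult_minus_distr_l, Rabs_mult, Rabs_right in L by lra.
      rewrite Rabs_left1 in L by lra.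
      assert (INR (b n) * - (P - x) <= INR (b n) * / 2^lo') by (apply Rmult_le_compat_l; lra).
      assert (Hd : dist_int (INR (b n) * P) <= dist_int (INR (b n) * x) + INR (b n) * / 2^lo') by lra.
      apply (Rmult_le_compat_l (r n)) in Hd; [|lra]. rewrite Rmult_plus_distr_l in Hd.
      replace (- / 2 ^ lo' * (r n * INR (b n))) with (- (r n * (INR (b n) * / 2 ^ lo'))) by ring. lra.
    + assert (0 <= r n * dist_int (INR (b n) * x)) by (apply Rmult_le_pos; lra).
      assert (0 <= / 2 ^ lo' * (r n * INR (b n))) by (apply Rmult_le_pos; [lra| apply Rmult_le_pos; lra]).
      lra.
Qed.

Lemma main_contra b r (H : Hyp b r) : False.
Proof.
  pose proof H as [_ [Hr [_ Hs]]].
  set (g := fun n => r n * dist_int (INR (b n) * xval (BG b r H))).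
  assert (Hg : forall n, 0 <= g n).
  { intros n. unfold g. pose proof (dist_nonneg (INR (b n) * xval (BG b r H))). specialize (Hr n). nra. }
  destruct (ser_bounded g Hg (Hs _ (xg_X b r H))) as [M HM].
  assert (K : forall I, INR I <= fs g 1 (Aa b r H I - 1)).
  { induction I.
    - simpl. change (Aa b r H 0) with 1%nat. simpl. lra.
    - pose proof (stage_contrib b r H I) as C. fold g in C.
      destruct (good_i b r H I) as [_ [HA _]].
      pose proof (proj2 (proj2 (inv_i b r H I))) as HA1.
      replace (Aa b r H (S I) - 1)%nat with ((Aa b r H I - 1) + (Aa b r H (S I) - Aa b r H I))%nat by lia.
      rewrite fs_split. replace (1 + (Aa b r H I - 1))%nat with (Aa b r H I) by lia.
      rewrite S_INR. lra. }
  assert (M0 : 0 <= M) by (specialize (HM 0%nat); simpl in HM; lra).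
  destruct (nfloor_ex M M0) as [n Hn].
  specialize (K (S n)). specialize (HM (Aa b r H (S n))).
  pose proof (proj2 (proj2 (inv_i b r H (S n)))) as HA1.
  replace (Aa b r H (S n)) with (1 + (Aa b r H (S n) - 1))%nat in HM by lia.
  rewrite fs_split in HM. simpl in HM. rewrite S_INR in K.
  pose proof (Hg 0%nat). lra.
Qed.

Theorem corollary3p15 (I : (nat -> Prop) -> Prop) :
  admissible_ideal I -> exists X : R -> Prop, Arbault X /\ ~ in_N_I I X.
Proof.
  intros _. exists XX. split.
  - split.
    + intros x [h _]; auto.
    + exists aa. split.
      * intros n. unfold aa. apply Nat.pow_lt_mono_r; [lia|]. apply Nat.pow_lt_mono_r; lia.
      * intros x [_ h]; auto.
  - intros [_ [b [r [Hb [Hr [Hdec [Hdiv [Hideal Hser]]]]]]]].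
    apply (main_contra b r (conj Hb (conj Hr (conj Hdiv Hser)))).
Qed.
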